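(* Fix $x\in\mathbb X$, $\Lambda\Subset\mathbb X\setminus\{x\}$ and a total order $\preceq$ on $\mathbf F(x)$. Let $X\in\mathbf F(x)$ with $Z_X(\Lambda)\neq0$. If $X\neq\{x\}$, then \[ \frac{Z_X(\Lambda\mid x)}{Z_X(\Lambda)}=1+(W(X)-1)\,R_X(X',\Lambda)\,\mathbf 1_{\{X'\subset\Lambda\}}. \] Consequently $\widehat z_X(x,\Lambda)=z(x)\big(1+(W(X)-1)R_X(X',\Lambda)\mathbf 1_{\{X'\subset\Lambda\}}\big)$, and this last identity also holds in the case $X=\{x\}$.
   Context: $\mathbb X$ is a finite or countably infinite set, $X\Subset\mathbb X$ means finite subset, $\mathbf F$ is the set of finite subsets of $\mathbb X$. Fix $z:\mathbb X\to\mathbb C$, $W:\mathbf F\to\mathbb C$; $f^X=\prod_{y\in X}f(y)$, $W(x)=W(\{x\})$; singletons $\{x\}$ are written $x$ inside arguments. For an interaction $V:\mathbf F\to\mathbb C$, the conditional interaction is $V(X\mid B)=\prod_{C\subset B}V(X\cup C)$ if $X\cap B=\varnothing$, $V(X\mid B)=0$ if $X=\{y\}$ with $y\in B$, and $V(X\mid B)=1$ otherwise; the Boltzmann factor is $\kappa(X\mid B)=\prod_{\varnothing\neq S\subset X}V(S\mid B)$; partition functions are $Z(X,\Lambda\mid B)=\sum_{Y\subset\Lambda\setminus X}z^{X\cup Y}\kappa(X\cup Y\mid B)$, $Z(\Lambda\mid B)=Z(\varnothing,\Lambda\mid B)$, with $B$ omitted when $B=\varnothing$; correlations $R(X,\Lambda\mid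 B)=Z(X,\Lambda\mid B)/Z(\Lambda\mid B)$ when the denominator is nonzero (so $R(\varnothing,\Lambda)=1$), and effective activities $\widehat z(y,\Lambda\mid B)=R(\{y\},\Lambda\mid B)$ for $y\notin\Lambda$. Let $\mathbf F(x)=\{X\Subset\mathbb X\mid x\in X\}$ and $X'=X\setminus\{x\}$. Given the total order $\preceq$ on $\mathbf F(x)$ (strict part $\prec$) and $X\in\mathbf F(x)$, define $W_X:\mathbf F\to\mathbb C$ by $W_X(Y)=W(Y)W(\{x\}\cup Y)$ if $x\notin Y$ and $\{x\}\cup Y\prec X$; $W_X(Y)=1$ if $x\in Y$ and $Y\neq X$; $W_X(Y)=W(Y)$ otherwise. Quantities built from $V=W_X$ are written $\kappa_X,Z_X,R_X,\widehat z_X$. *)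

(* Defs.v *)
From HB Require Import structures.
From mathcomp Require Import all_boot all_order all_algebra.
From mathcomp Require Import finmap.
From mathcomp Require Import complex.
From mathcomp Require Import reals.
Set Implicit Arguments. Unset Strict Implicit. Unset Printing Implicit Defensive.
Import Order.TTheory GRing.Theory Num.Theory.
Local Open Scope ring_scope.
Local Open Scope fset_scope.

Section Defs.
(* The countable (finite or countably infinite) site set 𝕏 is a countType T;
   finite subsets X ⋐ 𝕏 are elements of {fset T}. C is any field
   (instantiated with complex numbers in the statement). *)
Variables (T : countType) (C : fieldType).

Definition fpow (f : T -> C) (X : {fset T}) : C := \prod_(y <- X) f y.

Definition cond_int (V : {fset T} -> C) (X B : {fset T}) : C :=
  if X `&` B == fset0 then \prod_(D <- fpowerset B) V (X `|` D)
  else if (#|` X| == 1)%N && (X `<=` B) then 0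
  else 1.

Definition kappa (V : {fset T} -> C) (X B : {fset T}) : C :=
  \prod_(S <- fpowerset X | S != fset0) cond_int V S B.

Definition Zpart (z : T -> C) (V : {fset T} -> C) (X L B : {fset T}) : C :=
  \sum_(Y <- fpowerset (L `\` X)) fpow z (X `|` Y) * kappa V (X `|` Y) B.

Definition Z0 (z : T -> C) (V : {fset T} -> C) (L B : {fset T}) : C :=
  Zpart z V fset0 L B.

(* correlations R(X, Lambda | B) (only used where the denominator is nonzero) *)
Definition Rcorr (z : T -> C) (V : {fset T} -> C) (X L B : {fset T}) : C :=
  Zpart z V X L B / Z0 z V L B.

Definition zhat (z : T -> C) (V : {fset T} -> C) (y : T) (L B : {fset T}) : C :=
  Rcorr z V [fset y] L B.

Definition strict (le : {fset T} -> {fset T} -> bool) (A B : {fset T}) : bool :=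
  le A B && (A != B).

Definition WX (W : {fset T} -> C) (le : {fset T} -> {fset T} -> bool)
    (x : T) (X : {fset T}) (Y : {fset T}) : C :=
  if (x \notin Y) && strict le (x |` Y) X then W Y * W (x |` Y)
  else if (x \in Y) && (Y != X) then 1
  else W Y.

Definition total_order_on_Fx (le : {fset T} -> {fset T} -> bool) (x : T) : Prop :=
  [/\ (forall A, x \in A -> le A A),
      (forall A B, x \in A -> x \in B -> le A B -> le B A -> A = B),
      (forall A B D, x \in A -> x \in B -> x \in D -> le A B -> le B D -> le A D)
    & (forall A B, x \in A -> x \in B -> le A B || le B A)].
End Defs.

(* Main.v *)
Require Import Defs.
From HB Require Import structures.
From mathcomp Require Import all_boot all_order all_algebra.
From mathcomp Require Import finmap complex reals.
Import Order.TTheory GRing.Theory Num.Theory.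
Local Open Scope ring_scope.
Local Open Scope fset_scope.
Set Implicit Arguments. Unset Strict Implicit.

Lemma prod_if_eq (T : eqType) (C : comRingType) (s : seq T) c (b : C) :
  uniq s -> \prod_(S <- s) (if S == c then b else 1) = if c \in s then b else 1.
Proof.
move=> us; case: ifP => cs.
  rewrite (bigD1_seq c) //= eqxx big1 ?mulr1 // => i /negbTE -> //.
by rewrite big1_seq // => i /andP [_ ic]; case: eqP ic => // ->; rewrite cs.
Qed.

Lemma pow_single (T : countType) (C : comRingType) (F : {fset T} -> C) (x : T) :
  \prod_(D <- fpowerset [fset x]) F D = F fset0 * F [fset x].
Proof.
rewrite fpowerset1 big_fsetU1 ?big_seq_fset1 // inE.
by apply/eqP => /fsetP/(_ x); rewrite !inE eqxx.
Qed.

Lemma pow_U1 (T : countType) (C : comRingType) (F : {fset T} -> C) (P : pred {fset T}) x Y :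
  x \notin Y ->
  \prod_(S <- fpowerset (x |` Y) | P S) F S =
  \prod_(S <- fpowerset Y | P S) F S * \prod_(S <- fpowerset Y | P (x |` S)) F (x |` S).
Proof.
move=> xY.
rewrite (perm_big (fpowerset Y ++ map (fsetU [fset x]) (fpowerset Y))) ?big_cat ?big_map //.
have xnS : forall S, S \in fpowerset Y -> x \notin S.
  move=> S; rewrite fpowersetE => /fsubsetP SY; apply/negP => /SY; rewrite (negbTE xY).
  done.
apply: uniq_perm.
- exact: fset_uniq.
- rewrite cat_uniq fset_uniq map_inj_in_uniq ?fset_uniq ?andbT.
    apply/hasPn => S /mapP [S' _ ->]; apply/negP => /xnS; by rewrite fset1U1.
  move=> A B /xnS xA /xnS xB eAB; by rewrite -(fsetU1K xA) -(fsetU1K xB) eAB.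
- move=> S; rewrite mem_cat fpowersetE; apply/idP/idP.
    move=> SxY; case xS: (x \in S).
      apply/orP; right; apply/mapP; exists (S `\ x); last by rewrite fsetD1K.
      rewrite fpowersetE; apply/fsubsetP => a; rewrite !inE => /andP [ax aS].
      by move/fsubsetP: SxY => /(_ a aS); rewrite !inE (negbTE ax).
    apply/orP; left; rewrite fpowersetE; apply/fsubsetP => a aS.
    move/fsubsetP: SxY => /(_ a aS); rewrite !inE; case: eqP => // ax.
    by rewrite ax xS in aS.
  case/orP; first by rewrite fpowersetE => /fsubsetP SY; apply/fsubsetP => a /SY; rewrite !inE orbC => ->.
  case/mapP => S'; rewrite fpowersetE => /fsubsetP S'Y ->.
  apply/fsubsetP => a; rewrite !inE; case/orP => [->//|/S'Y ->]; by rewrite orbT.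
Qed.

Lemma sum_sup (T : countType) (C : comRingType) (F : {fset T} -> C) A L :
  A `<=` L ->
  \sum_(Y <- fpowerset (L `\` A)) F (A `|` Y) = \sum_(Y <- fpowerset L | A `<=` Y) F Y.
Proof.
move=> AL; rewrite -[RHS]big_filter -[LHS](big_map (fsetU A) xpredT F).
apply: perm_big; apply: uniq_perm.
- rewrite map_inj_in_uniq ?fset_uniq // => B D.
  rewrite !fpowersetCE => /andP [_ dB] /andP [_ dD] e.
  apply/fsetP => a; move/fsetP: e => /(_ a); rewrite !inE.
  case aA: (a \in A); last by rewrite /=.
  move: dB dD => /fdisjointP dB /fdisjointP dD.
  by case aB: (a \in B); [rewrite (negbTE (dB _ aB)) in aA|]; case aD: (a \in D) => //; rewrite (negbTE (dD _ aD)) in aA.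
- by rewrite filter_uniq ?fset_uniq.
- move=> S; rewrite mem_filter fpowersetE; apply/mapP/idP.
    case=> B; rewrite fpowersetCE => /andP [BL _] ->.
    by rewrite fsubsetUl fsubUset AL BL.
  case/andP => AS SL; exists (S `\` A); last first.
    apply/fsetP => a; rewrite !inE; case aA: (a \in A) => //=.
    by move/fsubsetP: AS => /(_ a aA) ->.
  rewrite fpowersetCE; apply/andP; split.
    by apply/fsubsetP => a; rewrite !inE => /andP [_ /(fsubsetP SL)].
  by apply/fdisjointP => a; rewrite !inE => /andP [].
Qed.

Lemma sum_split (T : countType) (C : comRingType) (s : seq {fset T}) (f : {fset T} -> C)
  (c : pred {fset T}) (a : C) :
  \sum_(Y <- s) f Y * (if c Y then a else 1) =
  (\sum_(Y <- s) f Y + (a - 1) * \sum_(Y <- s | c Y) f Y)%R.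
Proof.
rewrite [X in _ = (_ + _ * X)%R]big_mkcond /= mulr_sumr -big_split /=.
by apply: eq_bigr => Y _; case: (c Y); rewrite ?mulr0 ?addr0 ?mulr1 // mulrBl mul1r addrC subrK mulrC.
Qed.

Lemma cond0 (T : countType) (C : fieldType) (V : {fset T} -> C) S :
  cond_int V S fset0 = V S.
Proof. by rewrite /cond_int fsetI0 eqxx fpowerset0 big_seq_fset1 fsetU0. Qed.

Lemma kappa0 (T : countType) (C : fieldType) (V : {fset T} -> C) A :
  kappa V A fset0 = \prod_(S <- fpowerset A | S != fset0) V S.
Proof. by apply: eq_bigr => S _; rewrite cond0. Qed.

Lemma kappa1 (T : countType) (C : fieldType) (V : {fset T} -> C) (x : T) (Y : {fset T}) :
  x \notin Y ->
  kappa V Y [fset x] = kappa V Y fset0 * \prod_(S <- fpowerset Y | S != fset0) V (x |` S).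
Proof.
move=> xY; rewrite kappa0 -big_split /= /kappa big_seq_cond [RHS]big_seq_cond.
apply: eq_bigr => S /andP [SY _]; rewrite /cond_int.
have -> : S `&` [fset x] == fset0.
  apply/eqP/fsetP => a; rewrite !inE; case: (a =P x) => [->|]; rewrite ?andbF //.
  rewrite andbT; move: SY; rewrite fpowersetE => /fsubsetP SY'.
  by apply/negP => /SY'; rewrite (negbTE xY).
by rewrite pow_single fsetU0 fsetUC.
Qed.

Lemma VxS (T : countType) (C : fieldType) (W : {fset T} -> C) le (x : T) (X S : {fset T}) :
  x \in X -> x \notin S ->
  WX W le x X (x |` S) = if S == X `\ x then W X else 1.
Proof.
move=> xX xS; rewrite /WX fset1U1 /=.
have -> : (x |` S == X) = (S == X `\ x).
  by apply/eqP/eqP => [<-|->]; [rewrite fsetU1K | rewrite fsetD1K].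
by case: eqP => [->|]; rewrite ?fsetD1K.
Qed.

Lemma prodV (T : countType) (C : fieldType) (W : {fset T} -> C) le (x : T) (X : {fset T})
  (P : pred {fset T}) (Y : {fset T}) :
  x \in X -> x \notin Y ->
  \prod_(S <- fpowerset Y | P S) WX W le x X (x |` S) =
  if (X `\ x `<=` Y) && P (X `\ x) then W X else 1.
Proof.
move=> xX xY.
rewrite big_mkcond /= (eq_big_seq (fun S => if S == X `\ x then (if P (X `\ x) then W X else 1) else 1)).
  by rewrite prod_if_eq ?fset_uniq // fpowersetE; case: (_ `<=` _); case: (P _).
move=> S; rewrite fpowersetE => /fsubsetP SY.
have xS : x \notin S by apply/negP => /SY; rewrite (negbTE xY).
rewrite VxS //; case: eqP => [->|]; by case: (P _).
Qed.

Lemma kappaU1 (T : countType) (C : fieldType) (V : {fset T} -> C) (x : T) (Y : {fset T}) :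
  x \notin Y ->
  kappa V (x |` Y) fset0 = kappa V Y fset0 * \prod_(S <- fpowerset Y) V (x |` S).
Proof.
move=> xY; rewrite !kappa0 pow_U1 //; congr (_ * _).
apply: eq_bigl => S; apply/negP => /eqP/fsetP/(_ x); by rewrite fset1U1 inE.
Qed.

From mathcomp Require Import ring.

Lemma sum_sup2 (T : countType) (C : fieldType) (z : T -> C) V A L :
  \sum_(Y <- fpowerset L | A `<=` Y) (fpow z Y * kappa V Y fset0) =
  if A `<=` L then Zpart z V A L fset0 else 0.
Proof.
case: ifP => AL.
  by rewrite /Zpart (@sum_sup _ _ (fun Y => fpow z Y * kappa V Y fset0)).
rewrite big1_seq // => Y /andP [AY]; rewrite fpowersetE => YL.
by rewrite (fsubset_trans AY YL) in AL.
Qed.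

Lemma Z0E (T : countType) (C : fieldType) (z : T -> C) V L B :
  Z0 z V L B = \sum_(Y <- fpowerset L) fpow z Y * kappa V Y B.
Proof. by rewrite /Z0 /Zpart fsetD0; apply: eq_bigr => Y _; rewrite fset0U. Qed.

Local Open Scope ring_scope.

Lemma alg1 (F : fieldType) (Z a P : F) : Z != 0 ->
  (Z + (a - 1) * P) / Z = 1 + (a - 1) * (P / Z) * 1.
Proof. move=> Zn; field; exact: Zn. Qed.
Lemma alg0 (F : fieldType) (Z a P : F) : Z != 0 ->
  (Z + (a - 1) * 0) / Z = 1 + (a - 1) * (P / Z) * 0.
Proof. move=> Zn; field; exact: Zn. Qed.

Theorem lemma4p2 (R : realType) (T : countType)
    (z : T -> R[i]) (W : {fset T} -> R[i])
    (le : {fset T} -> {fset T} -> bool) (x : T) (L X : {fset T}) :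
  total_order_on_Fx le x ->
  x \notin L ->
  x \in X ->
  Z0 z (WX W le x X) L fset0%fset != 0 ->
  (X != [fset x]%fset ->
     Z0 z (WX W le x X) L [fset x]%fset / Z0 z (WX W le x X) L fset0%fset =
     1 + (W X - 1) * Rcorr z (WX W le x X) (X `\ x)%fset L fset0%fset
           * (if (X `\ x `<=` L)%fset then 1 else 0)) /\
  zhat z (WX W le x X) x L fset0%fset =
     z x * (1 + (W X - 1) * Rcorr z (WX W le x X) (X `\ x)%fset L fset0%fset
                 * (if (X `\ x `<=` L)%fset then 1 else 0)).
Proof.
move=> _ xL xX Z0n.
set V := WX W le x X.
have xnY : forall Y, Y \in fpowerset L -> x \notin Y.
  move=> Y; rewrite fpowersetE => /fsubsetP YL; apply/negP => /YL; by rewrite (negbTE xL).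
set Z := Z0 z V L fset0.
have ZE : Z = \sum_(Y <- fpowerset L) fpow z Y * kappa V Y fset0 by rewrite /Z Z0E.
have SE := sum_sup2 z V (X `\ x) L.
rewrite /Rcorr -/Z.
split.
  move=> Xn1.
  have X'n : (X `\ x != fset0).
    apply: contra Xn1 => /eqP e; by rewrite -(fsetD1K xX) e fsetU0.
  rewrite Z0E big_seq (eq_bigr (fun Y => (fpow z Y * kappa V Y fset0) *
      (if (X `\ x `<=` Y) && true then W X else 1))); last first.
    move=> Y YL; rewrite kappa1 ?xnY // prodV ?xnY // X'n mulrA //.
  rewrite -big_seq.
  under eq_bigr do rewrite andbT.
  rewrite sum_split -ZE SE.
  by case: ifP => _; [apply: alg1 | apply: alg0].
rewrite /zhat /Rcorr -/Z /Zpart.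
have -> : L `\` [fset x] = L.
  apply/fsetP => a; rewrite !inE; case: (a =P x) => [->|]; by rewrite ?(negbTE xL).
rewrite big_seq (eq_bigr (fun Y => z x * ((fpow z Y * kappa V Y fset0) *
      (if (X `\ x `<=` Y) && true then W X else 1)))); last first.
  move=> Y YL; rewrite /fpow big_fsetU1 ?xnY // kappaU1 ?xnY //.
  by rewrite (prodV W le (fun _ => true)) ?xnY // !mulrA.
rewrite -big_seq -mulr_sumr.
under eq_bigr do rewrite andbT.
rewrite sum_split -ZE SE.
case: ifP => _; rewrite -[LHS]mulrA; congr (_ * _).
  exact: alg1.
exact: alg0.
Qed.
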